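(* Let $X$ be a connected graph and let the Hamiltonian $M$ be one of $A$, $L$, $Q$. Let $a\neq b$ be vertices of $X$, let $s\in\mathbb{C}\setminus\{0\}$, and let $\mathbf u=\mathbf e_a+s\mathbf e_b$. If $\mathbf u$ is a fixed state (an eigenvector of $M$), then $|\Phi_{\mathbf u}|=1$. Otherwise $$|\Phi_{\mathbf u}|\ \ge\ \left\lceil \frac{\operatorname{dist}(a,b)}{2}\right\rceil ,$$ where $\operatorname{dist}(a,b)$ is the graph distance between $a$ and $b$.
   Context: Graphs are simple, undirected, unweighted and connected. $A$ is the adjacency matrix, $L=D-A$ the Laplacian and $Q=D+A$ the signless Laplacian, where $D$ is the diagonal degree matrix. For a real symmetric matrix $M$ with spectral decomposition $M=\sum_{\lambda\in\operatorname{spec}(M)}\lambda E_\lambda$ ($E_\lambda$ the orthogonal projection onto the $\lambda$-eigenspace), the eigenvalue support of a vector $\mathbf v$ is $\Phi_{\mathbf v}=\{\lambda: E_\lambda\mathbf v\neq \mathbf 0\}$. $\mathbf e_v$ denotes the standard basis vector of vertex $v$. *)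

(* Defs.v *)
From HB Require Import structures.
From mathcomp Require Import all_boot all_order all_algebra.
From mathcomp Require Import complex.
Set Implicit Arguments. Unset Strict Implicit. Unset Printing Implicit Defensive.
Import Order.TTheory GRing.Theory Num.Theory.
Local Open Scope ring_scope.

Definition simple_graph (n : nat) (e : rel 'I_n) : Prop :=
  symmetric e /\ irreflexive e.

Definition connected_graph (n : nat) (e : rel 'I_n) : Prop :=
  forall x y : 'I_n, connect e x y.

(* graph distance: least k such that there is a walk of k edges from a to b
   (returns n if b is unreachable from a; irrelevant for connected graphs) *)
Definition gdist (n : nat) (e : rel 'I_n) (a b : 'I_n) : nat :=
  find (fun k => [exists p : k.-tuple 'I_n, path e a p && (last a p == b)])
       (iota 0 n).

Section Mats.
Variable (R : rcfType) (n : nat) (e : rel 'I_n).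
Local Notation C := R[i].

Definition deg (i : 'I_n) : nat := #|[set j | e i j]|.

Definition adjM : 'M[C]_n := \matrix_(i, j) (e i j)%:R.
Definition degM : 'M[C]_n := \matrix_(i, j) ((i == j)%:R * (deg i)%:R).
Definition lapM : 'M[C]_n := degM - adjM.
Definition slapM : 'M[C]_n := degM + adjM.
End Mats.

Inductive hamiltonian := HA | HL | HQ.

Definition hamM (R : rcfType) (n : nat) (e : rel 'I_n) (h : hamiltonian)
  : 'M[R[i]]_n :=
  match h with HA => adjM R e | HL => lapM R e | HQ => slapM R e end.

Definition evec (R : rcfType) (n : nat) (v : 'I_n) : 'rV[R[i]]_n :=
  \row_j (j == v)%:R.

Definition adjointmx (R : rcfType) (n : nat) (E : 'M[R[i]]_n) : 'M[R[i]]_n :=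
  (map_mx Num.conj E)^T.

(* E is the orthogonal projection onto the row space of S
   (vectors are row vectors acting by right multiplication) *)
Definition is_orth_proj (R : rcfType) (n : nat) (E S : 'M[R[i]]_n) : Prop :=
  E *m E = E /\ adjointmx E = E /\ (E == S)%MS.

Definition in_eig_support (R : rcfType) (n : nat) (M : 'M[R[i]]_n)
  (u : 'rV[R[i]]_n) (lam : R[i]) : Prop :=
  eigenvalue M lam /\
  exists E : 'M[R[i]]_n, is_orth_proj E (eigenspace M lam) /\ u *m E != 0.

Definition eig_support_card (R : rcfType) (n : nat) (M : 'M[R[i]]_n)
  (u : 'rV[R[i]]_n) (k : nat) : Prop :=
  exists s : seq R[i], [/\ uniq s, size s = k &
    forall lam, lam \in s <-> in_eig_support M u lam].

Definition fixed_state (R : rcfType) (n : nat) (M : 'M[R[i]]_n)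
  (u : 'rV[R[i]]_n) : Prop :=
  u != 0 /\ exists lam : R[i], u *m M = lam *: u.

(* Main.v *)
Require Import Defs.
From HB Require Import structures.
From mathcomp Require Import all_boot all_order all_algebra.
From mathcomp Require Import complex spectral sesquilinear ring zify.
Set Implicit Arguments. Unset Strict Implicit. Unset Printing Implicit Defensive.
Import Order.TTheory GRing.Theory Num.Theory.

Section Balls.
Variable (n : nat) (e : rel 'I_n).
Hypothesis esym : symmetric e.

Fixpoint ball (x : 'I_n) (j : nat) : {set 'I_n} :=
  if j is j'.+1 then ball x j' :|: [set v | [exists w in ball x j', e w v]]
  else [set x].

Definition pball x j := if j is j'.+1 then ball x j' else set0.

Lemma ballS x j v w : w \in ball x j -> e w v -> v \in ball x j.+1.
Proof. by move=> Hw Hv; rewrite /= inE; apply/orP; right; rewrite inE; apply/existsP; exists w; rewrite Hw. Qed.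

Lemma ballP x j v : v \in ball x j <-> exists p, (size p <= j)%N /\ path e x p /\ last x p = v.
Proof.
elim: j v => [|j IH] v.
  split; first by rewrite inE => /eqP ->; exists [::].
  by case=> [[|y p]] [Hs [_ /= Hl]] //; rewrite inE -Hl.
split.
- rewrite /= inE => /orP [/IH [p [Hs Hp]]|]; first by exists p; split => //; apply: leqW.
  rewrite inE => /existsP [w /andP [/IH [p [Hs [Hp Hl]]] Hwv]].
  exists (rcons p v); rewrite size_rcons rcons_path last_rcons Hl Hp Hwv; split => //.
- case=> p [Hs [Hp Hl]]; case: (lastP p) Hs Hp Hl => [|q y] Hs Hp Hl.
    by rewrite /= inE; apply/orP; left; apply/IH; exists [::].
  rewrite size_rcons ltnS in Hs; rewrite last_rcons in Hl; subst y.
  move: Hp; rewrite rcons_path => /andP [Hq He].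
  by apply: (ballS _ He); apply/IH; exists q.
Qed.

Lemma ball_mono x i j : (i <= j)%N -> ball x i \subset ball x j.
Proof.
move=> Hij; apply/subsetP => v /ballP [p [Hs Hp]]; apply/ballP; exists p; split => //.
exact: leq_trans Hij.
Qed.

Lemma pball_sub x j : pball x j \subset ball x j.
Proof. by case: j => [|j]; [apply: sub0set | apply: ball_mono; apply: leqnSn]. Qed.

Lemma ball_sym x j v : v \in ball x j -> x \in ball v j.
Proof.
move=> /ballP [p [Hs [Hp Hl]]]; apply/ballP; exists (rev (belast x p)).
rewrite size_rev size_belast; split => //; split.
  by rewrite -Hl rev_path; apply: sub_path Hp => y z; rewrite esym.
case: p {Hs Hp} Hl => [|y q] /= Hl; first by [].
by rewrite rev_cons last_rcons.
Qed.

Lemma ball_trans x v w i j : v \in ball x i -> w \in ball v j -> w \in ball x (i + j).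
Proof.
move=> /ballP [p [Hs [Hp Hl]]] /ballP [q [Hs' [Hq Hl']]]; apply/ballP.
exists (p ++ q); rewrite size_cat cat_path last_cat Hl Hp Hq; split => //.
exact: leq_add.
Qed.

Lemma gdist_le a b k : b \in ball a k -> (gdist e a b <= k)%N.
Proof.
move=> /ballP [p [Hs [Hp Hl]]].
case: (ltnP (size p) n) => Hn.
  apply: leq_trans Hs; rewrite leqNgt; apply/negP => /(before_find 0%N).
  rewrite nth_iota // add0n => /negbT/negP; apply.
  apply/existsP; exists (in_tuple p); apply/andP; split; [exact: Hp | exact/eqP].
by apply: leq_trans Hs; apply: leq_trans Hn; apply: leq_trans (find_size _ _) _; rewrite size_iota.
Qed.

Lemma connect_ball a b : connect e a b -> exists N, b \in ball a N.
Proof. by case/connectP => p Hp Hl; exists (size p); apply/ballP; exists p. Qed.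

Lemma exact_ex a b j : connect e a b -> (j <= gdist e a b)%N ->
  exists v, v \in ball a j /\ v \notin pball a j.
Proof.
move=> Hc Hj; case: j Hj => [|j] Hj.
  by exists a; rewrite /= inE eqxx in_set0.
suff /subsetPn [v H1 H2] : ~~ (ball a j.+1 \subset ball a j) by exists v.
apply/negP => Hsub.
have Hst : forall k, ball a (j + k) \subset ball a j.
  elim=> [|k IH]; first by rewrite addn0.
  apply/subsetP => v; rewrite addnS /= inE => /orP [Hv|]; first exact: (subsetP IH).
  rewrite inE => /existsP [w /andP [Hw Hwv]]; apply: (subsetP Hsub).
  exact: (ballS (subsetP IH _ Hw) Hwv).
have [N HN] := connect_ball Hc.
have : b \in ball a j.
  apply: (subsetP (Hst N)); apply: (subsetP (ball_mono _ _) _ HN); exact: leq_addl.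
by move/gdist_le; rewrite leqNgt Hj.
Qed.
End Balls.

Local Open Scope ring_scope.

Section Walks.
Variable (R : rcfType) (n : nat) (e : rel 'I_n).
Local Notation C := R[i].
Variable (M : 'M[C]_n) (sg : C).
Hypothesis Hsg : sg * sg = 1.
Hypothesis H0 : forall i j, i != j -> ~~ e i j -> M i j = 0.
Hypothesis H1 : forall i j, i != j -> e i j -> M i j = sg.

Definition pw (x : 'rV[C]_n) j := iter j (fun y => y *m M) x.

Lemma pwS x j : pw x j.+1 = pw x j *m M.
Proof. by []. Qed.

Lemma pw_lin x y (s : C) j : pw (x + s *: y) j = pw x j + s *: pw y j.
Proof. by elim: j => [//|j IH]; rewrite !pwS IH mulmxDl scalemxAl. Qed.

Lemma pw_van x j v : v \notin ball e x j -> pw (evec R x) j 0 v = 0.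
Proof.
elim: j v => [|j IH] v Hv.
  by rewrite /= mxE; move: Hv; rewrite /= inE => /negbTE ->.
rewrite pwS mxE big1 // => w _.
have [Hw|Hw] := boolP (w \in ball e x j); last by rewrite IH // mul0r.
rewrite H0 ?mulr0 //.
  by apply: contraNneq Hv => <-; apply: (subsetP (@ball_mono _ e x _ _ (leqnSn j))) Hw.
by apply: contraNN Hv => Hwv; apply: ballS Hw Hwv.
Qed.

Lemma npball x j w v : v \notin ball e x j -> e w v -> w \notin pball e x j.
Proof.
case: j => [|j] Hv Hwv; first by rewrite in_set0.
by apply: contraNN Hv => Hw; apply: ballS Hw Hwv.
Qed.

Lemma pw_pos x j v : v \notin pball e x j ->
  0 <= sg ^+ j * pw (evec R x) j 0 v /\
  (v \in ball e x j -> 0 < sg ^+ j * pw (evec R x) j 0 v).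
Proof.
elim: j v => [|j IH] v Hv.
  rewrite /= expr0 mul1r mxE; split; first exact: ler0n.
  by rewrite inE => ->; rewrite ltr01.
set T := fun w => (sg ^+ j * pw (evec R x) j 0 w) * (sg * M w v).
have ET : sg ^+ j.+1 * pw (evec R x) j.+1 0 v = \sum_w T w.
  rewrite pwS mxE mulr_sumr; apply: eq_bigr => w _; rewrite /T exprS; ring.
have Tge : forall w, 0 <= T w.
  move=> w; rewrite /T; have [Ew|ne] := eqVneq w v.
    by rewrite Ew (@pw_van x j v Hv) mulr0 mul0r.
  have [Hwv|Hwv] := boolP (e w v); last by rewrite H0 // !mulr0.
  by rewrite H1 // Hsg mulr1; apply: (IH w (npball Hv Hwv)).1.
rewrite ET; split; first exact: sumr_ge0.
rewrite /= inE (negbTE Hv) /= inE => /existsP [w /andP [Hw Hwv]].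
rewrite (bigD1 w) //=; apply: ltr_wpDr; first exact: sumr_ge0.
have ne : w != v by apply: contraNneq Hv => <-.
by rewrite /T H1 // Hsg mulr1; apply: (IH w (npball Hv Hwv)).2.
Qed.

Definition Claim (a b : 'I_n) (s : C) (x : 'rV[C]_n) j := forall v,
  v \notin pball e a j -> v \notin pball e b j ->
  x 0 v = pw (evec R a + s *: evec R b) j 0 v.

Lemma nballp x j v : v \notin ball e x j -> v \notin pball e x j.
Proof. by apply: contraNN; apply: (subsetP (pball_sub _ _ _)). Qed.

Lemma claim_step a b s x j l : Claim a b s x j -> Claim a b s (x *m M - l *: x) j.+1.
Proof.
move=> Hc v Hva Hvb.
have Hx : x 0 v = 0.
  rewrite Hc ?nballp // pw_lin !mxE.
  by rewrite (pw_van Hva) (pw_van Hvb) mulr0 addr0.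
rewrite pwS !mxE Hx mulr0 subr0; apply: eq_bigr => w _.
have [Ew|ne] := eqVneq w v; first by rewrite Ew Hc ?nballp.
have [Hwv|Hwv] := boolP (e w v); last by rewrite H0 // !mulr0.
by rewrite Hc // ?(npball Hva Hwv) ?(npball Hvb Hwv).
Qed.

Lemma claim_fold a b s t x j : Claim a b s x j ->
  Claim a b s (foldl (fun y l => y *m M - l *: y) x t) (j + size t).
Proof.
elim: t x j => [|l t IH] x j Hc /=; first by rewrite addn0.
by rewrite addnS -addSn; apply: IH; apply: claim_step.
Qed.
End Walks.

Section Spec.
Variable (R : rcfType) (n : nat) (M : 'M[R[i]]_n).
Local Notation C := R[i].
Hypothesis Mherm : adjointmx M = M.

Lemma adjM (X Y : 'M[C]_n) : adjointmx (X *m Y) = adjointmx Y *m adjointmx X.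
Proof. by rewrite /adjointmx map_mxM trmx_mul. Qed.

Lemma adjK (X : 'M[C]_n) : adjointmx (adjointmx X) = X.
Proof. by apply/matrixP=> i j; rewrite !mxE conjCK. Qed.

Lemma orth_uniq (E F S : 'M[C]_n) : is_orth_proj E S -> is_orth_proj F S -> E = F.
Proof.
move=> [E2 [Ea ES]] [F2 [Fa FS]].
have FE : F *m E = F.
  have : (F <= E)%MS by rewrite (eqmxP FS) -(eqmxP ES) submx_refl.
  by case/submxP => D ->; rewrite -mulmxA E2.
have EF : E *m F = E.
  have : (E <= F)%MS by rewrite (eqmxP ES) -(eqmxP FS) submx_refl.
  by case/submxP => D ->; rewrite -mulmxA F2.
by rewrite -Ea -EF adjM Ea Fa FE.
Qed.

Let P := spectralmx M.
Let Q := adjointmx P.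
Let d := spectral_diag M.

Lemma PQ : P *m Q = 1%:M.
Proof. rewrite /Q /adjointmx map_trmx. exact/unitarymxP/spectral_unitarymx. Qed.

Lemma QP : Q *m P = 1%:M.
Proof.
rewrite /Q /adjointmx map_trmx -invmx_unitary ?spectral_unitarymx //.
by rewrite mulVmx ?spectral_unit.
Qed.

Lemma Mdec : M = Q *m diag_mx d *m P.
Proof.
have Mn : M \is normalmx by apply/normalmxP; rewrite -map_trmx; rewrite -/(adjointmx M) Mherm.
have E : M = invmx (spectralmx M) *m diag_mx (spectral_diag M) *m spectralmx M.
  exact/orthomx_spectralP.
have -> : Q = invmx P by rewrite invmx_unitary ?spectral_unitarymx // /Q /adjointmx map_trmx.
exact: E.
Qed.

Lemma MxE m (X : 'M[C]_(m, n)) : X *m M = X *m Q *m diag_mx d *m P.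
Proof. by rewrite {1}Mdec !mulmxA. Qed.

Lemma cancelP m (X Y : 'M[C]_(m, n)) : X *m P = Y *m P -> X = Y.
Proof. by move=> /(congr1 (mulmx^~ Q)); rewrite -!mulmxA PQ !mulmx1. Qed.

Lemma eig_iff m (X : 'M[C]_(m, n)) lam :
  X *m M = lam *: X <-> forall r i, (X *m Q) r i * d 0 i = lam * (X *m Q) r i.
Proof.
rewrite MxE; set Y := X *m Q; split.
- move=> H r i.
  have : Y *m diag_mx d = lam *: Y.
    by apply: cancelP; rewrite H /Y -scalemxAl -mulmxA QP mulmx1.
  by move/matrixP/(_ r i); rewrite mul_mx_diag !mxE.
- move=> H; have -> : Y *m diag_mx d = lam *: Y.
    by apply/matrixP => r i; rewrite mul_mx_diag [LHS]mxE [RHS]mxE H.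
  by rewrite -scalemxAl /Y -mulmxA QP mulmx1.
Qed.

Definition Dl (lam : C) : 'rV[C]_n := \row_i ((d 0 i == lam)%:R).
Definition El lam := Q *m diag_mx (Dl lam) *m P.

Lemma adj_diag (r : 'rV[C]_n) : (forall i, Num.conj (r 0 i) = r 0 i) ->
  adjointmx (diag_mx r) = diag_mx r.
Proof.
move=> H; apply/matrixP => i j; rewrite !mxE.
by case: (eqVneq i j) => [->|ne]; rewrite ?eqxx ?mulr1n ?H // !mulr0n conjC0.
Qed.

Lemma El_orth lam : is_orth_proj (El lam) (eigenspace M lam).
Proof.
split; [|split].
- rewrite /El -!mulmxA (mulmxA P) PQ mul1mx (mulmxA (diag_mx _)) mulmx_diag.
  congr (_ *m (_ *m _)); congr diag_mx; apply/rowP => i; rewrite !mxE.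
  by case: (_ == _); rewrite ?mulr1 ?mulr0.
- rewrite /El !adjM adjK mulmxA adj_diag //.
  by move=> i; rewrite mxE; case: (_ == _); rewrite ?conjC1 ?conjC0.
- apply/andP; split.
  + apply/eigenspaceP/eig_iff => r i.
    rewrite /El -mulmxA PQ mulmx1 mul_mx_diag !mxE.
    by case: eqVneq => [->|]; rewrite ?mulr1 ?mulr0 ?mul0r // mulrC.
  + set K := eigenspace M lam.
    have /eig_iff HK : K *m M = lam *: K by apply/eigenspaceP.
    suff -> : K = K *m El lam by apply: submxMl.
    rewrite /El !mulmxA.
    rewrite -[LHS]mulmx1 -QP mulmxA; congr (_ *m _).
    apply/matrixP => r i; rewrite mul_mx_diag [RHS]mxE [Dl _ 0 i]mxE.
    case: eqVneq => [_|ne]; first by rewrite mulr1.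
    rewrite mulr0; have := HK r i; move/eqP; rewrite -subr_eq0 [lam * _]mulrC -mulrBr mulf_eq0.
    by rewrite subr_eq0 eq_sym (negbTE ne) orbF => /eqP.
Qed.


Lemma row_neq0 (X : 'rV[C]_n) : X != 0 <-> exists i, X 0 i != 0.
Proof.
split.
- move=> H; suff /existsP [i Hi] : [exists i, X 0 i != 0] by exists i.
  apply: contraNT H => /existsPn Hn; apply/eqP/rowP => i; rewrite mxE.
  by move: (Hn i); rewrite negbK => /eqP.
- by move=> [i Hi]; apply: contraNneq Hi => ->; rewrite mxE.
Qed.

Lemma mulP_neq0 (X : 'rV[C]_n) : X *m P != 0 <-> X != 0.
Proof.
split; apply: contraNN => /eqP H; apply/eqP; first by rewrite H mul0mx.
by apply: cancelP; rewrite H mul0mx.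
Qed.

Lemma El_supp (u : 'rV[C]_n) lam :
  u *m El lam != 0 <-> exists i, (u *m Q) 0 i != 0 /\ d 0 i = lam.
Proof.
have -> : u *m El lam = (\row_i ((u *m Q) 0 i * (d 0 i == lam)%:R)) *m P.
  rewrite /El !mulmxA; congr (_ *m _); apply/rowP => i.
  by rewrite mul_mx_diag !mxE.
rewrite mulP_neq0 row_neq0; split.
- case=> i; rewrite mxE; case: (eqVneq (d 0 i) lam) => [E|ne] /=; last by rewrite mulr0 eqxx.
  by rewrite mulr1 => H; exists i.
- by move=> [i [H1 H2]]; exists i; rewrite mxE H2 eqxx mulr1.
Qed.

Lemma El_neq0 i : El (d 0 i) != 0.
Proof.
have Hx : P *m El (d 0 i) *m Q = diag_mx (Dl (d 0 i)).
  by rewrite /El !mulmxA PQ mul1mx -mulmxA PQ mulmx1.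
apply/negP => /eqP H0; move: Hx; rewrite H0 mulmx0 mul0mx => /matrixP/(_ i i).
rewrite !mxE !eqxx /= ?mulr1n; by move/eqP; rewrite eq_sym oner_eq0.
Qed.

Lemma eig_d i : eigenvalue M (d 0 i).
Proof.
rewrite /eigenvalue; apply: contraNneq (El_neq0 i) => H.
have [_ [_ /eqmxP HE]] := El_orth (d 0 i).
by rewrite -submx0 HE H submx_refl.
Qed.

Lemma supp_iff u lam :
  in_eig_support M u lam <-> exists i, (u *m Q) 0 i != 0 /\ d 0 i = lam.
Proof.
split.
- move=> [_ [E [HE Hu]]]; apply/El_supp.
  by rewrite -(orth_uniq HE (El_orth lam)).
- move=> H; have [i [Hi Hl]] := H; split; first by rewrite -Hl; exact: eig_d.
  by exists (El lam); split; [exact: El_orth | apply/El_supp; exists i].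
Qed.

Definition sl (u : 'rV[C]_n) :=
  undup [seq d 0 i | i <- [seq i <- enum 'I_n | (u *m Q) 0 i != 0]].

Lemma mem_sl u lam : lam \in sl u <-> exists i, (u *m Q) 0 i != 0 /\ d 0 i = lam.
Proof.
rewrite mem_undup; split.
- by case/mapP => i; rewrite mem_filter mem_enum andbT => H ->; exists i.
- move=> [i [H <-]]; apply/mapP; exists i => //.
  by rewrite mem_filter mem_enum andbT.
Qed.

Lemma card_sl u : eig_support_card M u (size (sl u)).
Proof.
exists (sl u); split => //; first exact: undup_uniq.
by move=> lam; rewrite supp_iff mem_sl.
Qed.

Lemma size1 (T : eqType) (s : seq T) (lam y : T) : uniq s ->
  (forall x, x \in s -> x = lam) -> y \in s -> size s = 1%N.
Proof.
case: s => [//|x [//|z t]] /= /andP [H _] Hall _.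
have Hx := Hall x (mem_head _ _).
have Hz : z = lam by apply: Hall; rewrite in_cons mem_head orbT.
by case/negP: H; rewrite Hx Hz mem_head.
Qed.

Lemma fixed_sl u : fixed_state M u -> size (sl u) = 1%N.
Proof.
move=> [u0 [lam Hl]].
have /eig_iff Hd := Hl.
have Hall : forall x, x \in sl u -> x = lam.
  move=> x /mem_sl [i [Hi <-]]; have := Hd 0 i; move/eqP.
  rewrite -subr_eq0 [lam * _]mulrC -mulrBr mulf_eq0 (negbTE Hi) /= subr_eq0.
  by move/eqP.
have [i Hi] : exists i, (u *m Q) 0 i != 0.
  have Hu : u *m Q *m P != 0 by rewrite -mulmxA QP mulmx1.
  by move/mulP_neq0/row_neq0: Hu.
have Hin : d 0 i \in sl u by apply/mem_sl; exists i.
exact: (size1 (undup_uniq _) Hall Hin).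
Qed.

Definition stepM (x : 'rV[C]_n) (l : C) := x *m M - l *: x.

Lemma stepP (y : 'rV[C]_n) l :
  stepM (y *m P) l = (\row_i (y 0 i * (d 0 i - l))) *m P.
Proof.
rewrite /stepM MxE -(mulmxA y P) PQ mulmx1 scalemxAl -mulmxBl; congr (_ *m _).
by apply/rowP => i; rewrite mul_mx_diag !mxE mulrBr [l * _]mulrC.
Qed.

Lemma foldP (t : seq C) (y : 'rV[C]_n) :
  foldl stepM (y *m P) t = (\row_i (y 0 i * \prod_(l <- t) (d 0 i - l))) *m P.
Proof.
elim: t y => [|l t IH] y /=.
  by congr (_ *m _); apply/rowP => i; rewrite mxE big_nil mulr1.
rewrite stepP IH; congr (_ *m _); apply/rowP => i.
by rewrite !mxE big_cons mulrA.
Qed.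

Lemma fold_sl u : foldl stepM u (sl u) = 0.
Proof.
set w := u *m Q.
have Hu : u = w *m P by rewrite /w -mulmxA QP mulmx1.
rewrite {1}Hu foldP -[RHS](mul0mx _ P); congr (_ *m _).
apply/rowP => i; rewrite [LHS]mxE [RHS]mxE.
have [->|Hi] := eqVneq (w 0 i) 0; first by rewrite mul0r.
rewrite (big_rem (d 0 i)) /=; first by rewrite subrr mul0r mulr0.
by apply/mem_sl; exists i.
Qed.
End Spec.
Section Ham.
Variable (R : rcfType) (n : nat) (e : rel 'I_n) (h : hamiltonian).
Hypothesis esym : symmetric e.
Local Notation M := (hamM R e h).
Definition sgh : R[i] := if h is HL then -1 else 1.

Lemma sgh2 : sgh * sgh = 1.
Proof. by rewrite /sgh; case: h; rewrite ?mulr1 ?mulrNN ?mulr1. Qed.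

Lemma ham_off i j : i != j -> M i j = sgh * (e i j)%:R.
Proof.
move=> ne; rewrite /sgh; case: h => /=; rewrite !mxE ?(negbTE ne) /= ?mul0r ?mul1r //.
  by rewrite sub0r mulN1r.
by rewrite add0r.
Qed.

Lemma ham0 i j : i != j -> ~~ e i j -> M i j = 0.
Proof. by move=> ne ne'; rewrite ham_off // (negbTE ne') mulr0. Qed.

Lemma ham1 i j : i != j -> e i j -> M i j = sgh.
Proof. by move=> ne ne'; rewrite ham_off // ne' mulr1. Qed.

Lemma ham_herm : adjointmx M = M.
Proof.
apply/matrixP => i j; rewrite /adjointmx mxE [map_mx _ _ _ _]mxE.
have [->|ne] := eqVneq i j.
  by case: h => /=; rewrite !mxE ?rmorphB ?rmorphD ?rmorphM !rmorph_nat.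
rewrite !ham_off // 1?eq_sym // esym rmorphM rmorph_nat /sgh.
by case: h; rewrite ?rmorphN rmorph1.
Qed.
End Ham.

Unset Implicit Arguments.

Theorem mainTheorem1 (R : rcfType) (n : nat) (e : rel 'I_n)
  (h : hamiltonian) (a b : 'I_n) (s : R[i]) :
  simple_graph e -> connected_graph e ->
  a != b -> s != 0 ->
  let u := evec R a + s *: evec R b in
  (fixed_state (hamM R e h) u -> eig_support_card (hamM R e h) u 1) /\
  (~ fixed_state (hamM R e h) u ->
     exists k : nat, eig_support_card (hamM R e h) u k /\
       uphalf (gdist e a b) <= k)%N.
Proof.
move=> [esym eirr] Hconn Hab Hs u.
have Hh := ham_herm R h esym.
split.
  by move=> Hf; rewrite -(fixed_sl Hh Hf); apply: card_sl.
move=> _; exists (size (sl (hamM R e h) u)); split; first exact: card_sl.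
rewrite leqNgt; apply/negP => Hlt.
set j := size (sl (hamM R e h) u) in Hlt.
set d := gdist e a b in Hlt.
have Hjd : (j + j < d)%N.
  move: Hlt; rewrite uphalf_half; have := odd_double_half d.
  case: (odd d) => /= Hd; rewrite -Hd; rewrite -!muln2 /=; lia.
have Hc0 : Claim e (hamM R e h) a b s u 0 by [].
have HC := claim_fold (@ham0 R n e h) (t := sl (hamM R e h) u) Hc0.
have := fold_sl Hh u; rewrite /stepM => H0.
rewrite H0 add0n -/j in HC.
have [v [Hv1 Hv2]] := exact_ex (j := j) (Hconn a b) (ltnW (leq_ltn_trans (leq_addl j j) Hjd)).
have Hvb : v \notin ball e b j.
  apply/negP => /(ball_sym esym) Hbv.
  have := gdist_le (ball_trans Hv1 Hbv); rewrite -/d leqNgt Hjd //.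
have := HC v Hv2 (nballp Hvb); rewrite mxE pw_lin !mxE.
rewrite (pw_van (@ham0 R n e h) Hvb) mulr0 addr0 => Hz.
have := (pw_pos (sgh2 R h) (@ham0 R n e h) (@ham1 R n e h) Hv2).2 Hv1.
by rewrite -Hz mulr0 ltxx.
Qed.
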